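(* Let $T$ be an ergodic probability preserving transformation of a probability space $(X,\mathcal B,m)$, let $G$ be an Abelian locally compact second countable group, and let $\varphi:X\to G$ be measurable with $T_\varphi(x,y)=(Tx,\varphi(x)+y)$ ergodic on $(X\times G,m\times m_G)$. Then there is a surjective semigroup homomorphism $\pi_\varphi:\mathcal L_\varphi\to\mathcal E_\varphi$ such that whenever $Q(x,y)=(Sx,f(x)+w(y))$ (with $S$ a commutor of $T$, $f:X\to G$ measurable, $w$ a surjective continuous endomorphism of $G$) is a commutor of $T_\varphi$, then $w=\pi_\varphi(S)$.
   Context: A commutor of a non-singular transformation $R$ is a non-singular transformation commuting with $R$. $\mathcal L_\varphi$ is the set of commutors $S$ of $T$ for which there exist a surjective continuous group endomorphism $w$ of $G$ and measurable $f:X\to G$ such that $(x,y)\mapsto(Sx,f(x)+w(y))$ is a commutor of $T_\varphi$; $\mathcal E_\varphi$ is the set of all such $w$ (both are semigroups under composition). $m_G$ is Haar measure. *)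

(* Defs.v *)
From HB Require Import structures.
From mathcomp Require Import all_boot all_order all_algebra.
From mathcomp Require Import all_classical all_reals all_analysis.
Set Implicit Arguments. Unset Strict Implicit. Unset Printing Implicit Defensive.
Import Order.TTheory GRing.Theory Num.Theory.
Local Open Scope classical_set_scope.
Local Open Scope ring_scope.

(* The Borel measurable space of a topological abelian group G:
   the carrier is G itself (pointed by 0, as g_sigma_algebraType requires a
   pointed type), the sigma-algebra is generated by the open sets of G. *)
Definition pointed_carrier (G : topologicalZmodType) : Type := G.
HB.instance Definition _ (G : topologicalZmodType) :=
  Choice.on (pointed_carrier G).
HB.instance Definition _ (G : topologicalZmodType) :=
  isPointed.Build (pointed_carrier G) (0 : G).
Notation borel G := (@g_sigma_algebraType (pointed_carrier G) (@open G)).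

Section Defs.
Context {R : realType}.
Local Open Scope ereal_scope.

Definition haar_measure (G : topologicalZmodType) (mG : set (borel G) -> \bar R)
  : Prop :=
  [/\ (forall (x : G) (A : set (borel G)), measurable A ->
         mG [set ((x : G) + (a : G))%R | a in A] = mG A),
      (forall K : set G, compact K -> mG K < +oo) &
      (forall U : set G, open U -> U !=set0 -> 0 < mG U)].

Definition measure_preserving d (Y : measurableType d) (mu : set Y -> \bar R)
  (S : Y -> Y) : Prop :=
  measurable_fun setT S /\ forall A, measurable A -> mu (S @^-1` A) = mu A.

Definition nonsingular d (Y : measurableType d) (mu : set Y -> \bar R)
  (S : Y -> Y) : Prop :=
  measurable_fun setT S /\
  forall A, measurable A -> (mu (S @^-1` A) = 0 <-> mu A = 0).

Definition ergodic d (Y : measurableType d) (mu : set Y -> \bar R)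
  (S : Y -> Y) : Prop :=
  forall A, measurable A -> S @^-1` A = A -> mu A = 0 \/ mu (~` A) = 0.

Definition commutor d (Y : measurableType d) (mu : {measure set Y -> \bar R})
  (Rt S : Y -> Y) : Prop :=
  nonsingular mu S /\ {ae mu, forall y, S (Rt y) = Rt (S y)}.

End Defs.

Definition skew_product (X : Type) (G : zmodType) (T : X -> X) (phi : X -> G)
  : X * G -> X * G := fun xy => (T xy.1, (phi xy.1 + xy.2)%R).

Definition lift_map (X : Type) (G : zmodType) (S : X -> X) (f : X -> G)
  (w : G -> G) : X * G -> X * G := fun xy => (S xy.1, (f xy.1 + w xy.2)%R).

Definition surj_cont_endo (G : topologicalZmodType) (w : G -> G) : Prop :=
  [/\ {morph w : a b / (a + b)%R}, continuous w & forall b : G, exists a : G, w a = b].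

Section LE.
Context {R : realType} (dX : measure_display) (X : measurableType dX)
  (G : topologicalZmodType) (m : {measure set X -> \bar R})
  (mG : {sigma_finite_measure set (borel G) -> \bar R}) (T : X -> X)
  (phi : X -> G).
Local Open Scope ereal_scope.

Definition lifts (S : X -> X) (f : X -> G) (w : G -> G) : Prop :=
  [/\ commutor m T S, measurable_fun setT (f : X -> borel G), surj_cont_endo w &
      commutor (m \x mG) (skew_product T phi : X * borel G -> X * borel G)
        (lift_map S f w)].

Definition in_L (S : X -> X) : Prop := exists f w, lifts S f w.
Definition in_E (w : G -> G) : Prop := exists S f, lifts S f w.
End LE.

(* Main.v *)
Require Import Defs.
From HB Require Import structures.
From mathcomp Require Import all_boot all_order all_algebra.
From mathcomp Require Import all_classical all_reals all_analysis.
Set Implicit Arguments. Unset Strict Implicit. Unset Printing Implicit Defensive.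
Import Order.TTheory GRing.Theory Num.Theory.
Local Open Scope classical_set_scope.
Local Open Scope ring_scope.

Section TopMeas.
Variable G : topologicalZmodType.
Local Notation BG := (borel G).

Lemma open_mbl (U : set G) : open U -> measurable (U : set BG).
Proof. by move=> oU; apply: sub_sigma_algebra. Qed.

Lemma basis_enum : @second_countable G ->
  exists e : nat -> set G, (forall n, open (e n)) /\
    (forall (x : G) (A : set G), nbhs x A -> exists n, e n x /\ e n `<=` A).
Proof.
move=> [B cB [Bo Bb]].
have [B0|[f]] := pfcard_geP cB.
  exfalso; have := Bb 0 setT filterT; rewrite B0.
  by move=> [V [] []].
have fB n : B (f n) by apply: (@funS _ _ _ _ f).
have fs : set_surj setT B f by exact: surj.
exists f; split; first by move=> n; apply: Bo.
move=> x A /Bb [V [BV Vx] VA].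
have [n _ fnV] := fs V BV.
by exists n; rewrite fnV.
Qed.


Lemma open_prod_mbl : @second_countable G -> forall W : set (G * G),
  open W -> measurable (W : set (BG * BG)).
Proof.
move=> /basis_enum [e [eo eb]] W oW.
have -> : W = \bigcup_(k : nat * nat)
   (if pselect (e k.1 `*` e k.2 `<=` W) then e k.1 `*` e k.2 else set0).
  apply/seteqP; split.
    move=> p Wp.
    have : nbhs p W by apply: open_nbhs_nbhs.
    move=> [[A1 A2] [nA1 nA2] A12W].
    have [i [ei eiA]] := eb _ _ nA1.
    have [j [ej ejA]] := eb _ _ nA2.
    exists (i, j) => //=.
    case: pselect => /= [_|]; first by split.
    by apply; apply: subset_trans A12W; apply: setSX.
  move=> p [k _] /=.
  by case: pselect => // h /h.
apply: countable_bigcupT_measurable => // k.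
destruct (pselect (e k.1 `*` e k.2 `<=` W)); last exact: measurable0.
by apply: measurableX; apply: open_mbl.
Qed.

Lemma cont2_mbl : @second_countable G -> forall F : G * G -> G,
  continuous F -> measurable_fun setT (F : BG * BG -> BG).
Proof.
move=> sc F cF.
apply: (@measurability _ _ (BG * BG)%type BG setT (F : BG * BG -> BG) (@open G)) => //.
move=> _ [U oU <-]; rewrite setTI.
apply: open_prod_mbl => //.
by apply: open_comp => // x _; apply: cF.
Qed.

Lemma cont_mbl (F : G -> G) :
  continuous F -> measurable_fun setT (F : BG -> BG).
Proof.
move=> cF.
apply: (@measurability _ _ BG BG setT (F : BG -> BG) (@open G)) => //.
move=> _ [U oU <-]; rewrite setTI.
apply: open_mbl.
by apply: open_comp => // x _; apply: cF.
Qed.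


Lemma mbl_add d (X : measurableType d) (a b : X -> G) : @second_countable G ->
  measurable_fun setT (a : X -> BG) -> measurable_fun setT (b : X -> BG) ->
  measurable_fun setT ((fun x => a x + b x) : X -> BG).
Proof.
move=> sc ma mb.
have h := @cont2_mbl sc (fun p : G * G => p.1 + p.2) (@add_continuous G).
exact: (measurableT_comp h (measurable_fun_pair ma mb)).
Qed.

Lemma mbl_comp_cont d (X : measurableType d) (a : X -> G) (F : G -> G) :
  continuous F -> measurable_fun setT (a : X -> BG) ->
  measurable_fun setT ((fun x => F (a x)) : X -> BG).
Proof.
move=> cF ma.
exact: (measurableT_comp (cont_mbl cF) ma).
Qed.

Lemma mbl_sub d (X : measurableType d) (a b : X -> G) : @second_countable G ->
  measurable_fun setT (a : X -> BG) -> measurable_fun setT (b : X -> BG) ->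
  measurable_fun setT ((fun x => a x - b x) : X -> BG).
Proof.
move=> sc ma mb; apply: mbl_add => //.
exact: (mbl_comp_cont (@opp_continuous G)).
Qed.

End TopMeas.


Section AE.
Context {R : realType}.
Local Open Scope ereal_scope.

Lemma aeE d (Y : measurableType d) (mu : {measure set Y -> \bar R}) (P : Y -> Prop) :
  {ae mu, forall x, P x} <->
  exists N, [/\ measurable N, mu N = 0 & forall x, ~ N x -> P x].
Proof.
split.
  move=> [N [mN N0 sub]]; exists N; split => // x Nx.
  by apply: contrapT => /sub.
move=> [N [mN N0 h]]; exists N; split => // x /= nPx.
by apply: contrapT => /h.
Qed.

Lemma mpre d d' (Y : measurableType d) (Z : measurableType d') (f : Y -> Z) A :
  measurable_fun setT f -> measurable A -> measurable (f @^-1` A).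
Proof. by move=> mf mA; rewrite -[_ @^-1` _]setTI; apply: mf. Qed.

Lemma nonsingular_null d (Y : measurableType d) (mu : {measure set Y -> \bar R})
  (S : Y -> Y) N : nonsingular mu S -> measurable N -> mu N = 0 ->
  mu (S @^-1` N) = 0.
Proof. by move=> [mS h] mN N0; apply/h. Qed.

Lemma commutor_comp d (Y : measurableType d) (mu : {measure set Y -> \bar R})
  (Rt S1 S2 : Y -> Y) :
  commutor mu Rt S1 -> commutor mu Rt S2 -> commutor mu Rt (S1 \o S2).
Proof.
move=> [[mS1 ns1] c1] [[mS2 ns2] c2]; split.
  split; first exact: measurableT_comp.
  move=> A mA; rewrite comp_preimage.
  have mA1 := mpre mS1 mA.
  by rewrite (ns2 _ mA1) (ns1 _ mA).
move/aeE: c1 => [N1 [mN1 N10 h1]]; move/aeE: c2 => [N2 [mN2 N20 h2]].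
apply/aeE; exists (N2 `|` S2 @^-1` N1); split.
- by apply: measurableU => //; apply: mpre.
- apply/eqP; rewrite -measure_le0.
  apply: le_trans (measureU2 _ _ _) _ => //; first exact: mpre.
  suff : mu N2 + mu (S2 @^-1` N1) <= 0 by [].
  have -> : mu (S2 @^-1` N1) = 0 by apply: (nonsingular_null (conj mS2 ns2)).
  by rewrite N20 adde0.
- move=> x /not_orP [nN2 nN1] /=.
  by rewrite h2 // h1.
Qed.

End AE.


Section Comp.
Context {R : realType} (dX : measure_display) (X : measurableType dX)
  (G : topologicalZmodType) (m : {measure set X -> \bar R})
  (mG : {sigma_finite_measure set (borel G) -> \bar R}) (T : X -> X)
  (phi : X -> G).

Lemma sce_comp (w1 w2 : G -> G) : surj_cont_endo w1 -> surj_cont_endo w2 ->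
  surj_cont_endo (w1 \o w2).
Proof.
move=> [a1 c1 s1] [a2 c2 s2]; split.
- by move=> a b /=; rewrite a2 a1.
- by move=> x; apply: continuous_comp; [apply: c2|apply: c1].
- move=> b; have [a1' <-] := s1 b; have [a <-] := s2 a1'.
  by exists a.
Qed.

Lemma lifts_comp S1 f1 w1 S2 f2 w2 : @second_countable G ->
  lifts m mG T phi S1 f1 w1 -> lifts m mG T phi S2 f2 w2 ->
  lifts m mG T phi (S1 \o S2) (fun x => f1 (S2 x) + w1 (f2 x)) (w1 \o w2).
Proof.
move=> sc [cS1 mf1 e1 cQ1] [cS2 mf2 e2 cQ2]; split.
- exact: commutor_comp.
- apply: mbl_add => //.
    apply: measurableT_comp mf1 _; by case: cS2 => [[]].
  by apply: mbl_comp_cont => //; case: e1.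
- exact: sce_comp.
- have -> : lift_map (S1 \o S2) (fun x => f1 (S2 x) + w1 (f2 x)) (w1 \o w2) =
     lift_map S1 f1 w1 \o lift_map S2 f2 w2.
    apply/funext => -[x y]; rewrite /lift_map /=.
    case: e1 => a1 _ _.
    by rewrite a1 addrA.
  exact: commutor_comp.
Qed.

End Comp.


Section Erg.
Context {R : realType}.
Local Open Scope ereal_scope.
Context d (Y : measurableType d) (mu : {measure set Y -> \bar R}) (Tp : Y -> Y).
Hypothesis mTp : measurable_fun setT Tp.
Hypothesis nTp : forall N, measurable N -> mu N = 0 -> mu (Tp @^-1` N) = 0.
Hypothesis eTp : ergodic mu Tp.

Lemma iter_mbl n : measurable_fun setT (iter n Tp).
Proof.
elim: n => [|n IH]; first exact: measurable_id.
rewrite (_ : iter n.+1 Tp = Tp \o iter n Tp) //.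
exact: measurableT_comp.
Qed.

Lemma iter_null n N : measurable N -> mu N = 0 -> mu (iter n Tp @^-1` N) = 0.
Proof.
elim: n N => [|n IH] N mN N0 //.
rewrite (_ : iter n.+1 Tp @^-1` N = iter n Tp @^-1` (Tp @^-1` N)); last first.
  by [].
apply: IH; first exact: mpre.
exact: nTp.
Qed.

Lemma ae_inv_ergodic A N : measurable A -> measurable N -> mu N = 0 ->
  (forall p, ~ N p -> (A (Tp p) <-> A p)) -> mu A = 0 \/ mu (~` A) = 0.
Proof.
move=> mA mN N0 hA.
pose M := \bigcup_n (iter n Tp @^-1` N).
have mM : measurable M.
  by apply: bigcupT_measurable => n; apply: mpre => //; apply: iter_mbl.
have nM : mu.-negligible M.
  apply: negligible_bigcup => n; exists (iter n Tp @^-1` N); split => //.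
  - by apply: mpre => //; apply: iter_mbl.
  - exact: iter_null.
pose As := [set p | forall k, exists2 n, (k <= n)%N & A (iter n Tp p)].
have mAs : measurable As.
  have -> : As = \bigcap_k \bigcup_(n in [set n | (k <= n)%N]) (iter n Tp @^-1` A).
    apply/seteqP; split => p /=.
      by move=> h k _; have [n kn An] := h k; exists n.
    by move=> h k; have [n kn An] := h k I; exists n.
  apply: bigcapT_measurable => k; apply: bigcup_measurable => n _.
  by apply: mpre => //; apply: iter_mbl.
have inv : Tp @^-1` As = As.
  apply/seteqP; split => p /=.
    move=> h k; have [n kn An] := h k; exists n.+1; first exact: leqW.
    by rewrite iterSr.
  move=> h k; have [[|n] kn An] := h k.+1 => //.
  by exists n => //; rewrite -iterSr.
have eqM p : ~ M p -> (As p <-> A p).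
  move=> nMp.
  have hn n : A (iter n Tp p) <-> A p.
    elim: n => [|n IH] //=.
    rewrite -IH; apply: hA => Np; apply: nMp; exists n => //.
  split; first by move=> /(_ 0%N) [n _ /hn].
  by move=> Ap k; exists k => //; apply/hn.
have [As0|Asc0] := eTp mAs inv.
- left; apply/(measure_negligible mA).
  apply: (@negligibleS _ _ _ _ (As `|` M)); last first.
    by apply: negligibleU => //; exists As; split.
  move=> p Ap; have [Mp|nMp] := pselect (M p); first by right.
  by left; apply/(eqM _ nMp).
- right; apply/(measure_negligible (measurableC mA)).
  apply: (@negligibleS _ _ _ _ (~` As `|` M)); last first.
    by apply: negligibleU => //; exists (~` As); split => //; apply: measurableC.
  move=> p nAp; have [Mp|nMp] := pselect (M p); first by right.
  by left => /(eqM _ nMp).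
Qed.

End Erg.


Section Main.
Context {R : realType} (dX : measure_display) (X : measurableType dX)
  (m : probability X R) (G : topologicalZmodType)
  (mG : {sigma_finite_measure set (borel G) -> \bar R}) (T : X -> X) (phi : X -> G).
Hypotheses (hG : hausdorff_space G) (sc : @second_countable G)
  (hm : haar_measure mG) (mpT : measure_preserving m T)
  (mphi : measurable_fun setT (phi : X -> borel G)).
Local Notation BG := (borel G).
Local Notation P := (X * BG)%type.
Local Notation Tp := (skew_product T phi : P -> P).
Local Notation mu := (m \x mG)%E.
Local Open Scope ereal_scope.

Lemma Tp_mbl : measurable_fun setT Tp.
Proof.
apply: measurable_fun_pair.
  by apply: measurableT_comp (proj1 mpT) _; exact: measurable_fst.
apply: (@mbl_add G _ P (fun p : P => phi p.1) (fun p : P => p.2)) => //.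
  exact: measurableT_comp mphi measurable_fst.
exact: measurable_snd.
Qed.

Lemma Tp_pres N : measurable N -> mu (Tp @^-1` N) = mu N.
Proof.
move=> mN.
rewrite /product_measure1 /=.
transitivity (\int[m]_x (mG \o xsection N) (T x)).
  apply: eq_integral => x _ /=.
  have -> : xsection (Tp @^-1` N) x =
      [set ((- phi x) + a)%R | a in xsection N (T x)].
    apply/seteqP; split => y.
      move=> /xsectionP /= Ny; exists (phi x + y)%R; last by rewrite addKr.
      exact/xsectionP.
    move=> [a /xsectionP Na <-]; apply/xsectionP => /=.
    by rewrite /skew_product /= addNKr.
  case: hm => h _ _; apply: h.
  exact: measurable_xsection.
have mF := @measurable_fun_xsection _ _ X BG R mG N mN.
transitivity (\int[pushforward m T]_x (mG \o xsection N) x).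
  by rewrite (@ge0_integral_pushforward _ _ X X R T (proj1 mpT) m setT).
apply: (@eq_measure_integral _ _ _ setT m); first exact: (proj1 mpT).
move=> mT A mA _; case: mpT => _ h; exact: h.
Qed.

Lemma Tp_null N : measurable N -> mu N = 0 -> mu (Tp @^-1` N) = 0.
Proof. by move=> mN; rewrite Tp_pres. Qed.

Lemma mu_setT_neq0 : mu setT != 0.
Proof.
rewrite -setXTT product_measure1E //.
rewrite [X in (X * _)](_ : _ = 1); last exact: probability_setT.
rewrite mul1e.
case: hm => _ _ h.
rewrite gt_eqF // h //; first exact: openT.
by exists 0%R.
Qed.


Lemma inv_const (Psi : P -> G) : measurable_fun setT (Psi : P -> BG) ->
  ergodic mu Tp -> {ae mu, forall p, Psi (Tp p) = Psi p} ->
  exists c : G, exists N, [/\ measurable N, mu N = 0 & forall p, ~ N p -> Psi p = c].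
Proof.
move=> mPsi eTp /aeE [N0 [mN0 N00 hN0]].
have hB (B : set G) : open B ->
    mu (Psi @^-1` B) = 0 \/ mu (~` (Psi @^-1` B)) = 0.
  move=> oB.
  apply: (ae_inv_ergodic Tp_mbl Tp_null eTp (N := N0)) => //.
    by apply: (mpre mPsi); apply: open_mbl.
  by move=> p /hN0 e; rewrite /preimage /= e.
have [e [eo eb]] := basis_enum sc.
pose Z n := if pselect (mu (Psi @^-1` e n) = 0) then Psi @^-1` e n
            else ~` (Psi @^-1` e n).
have mZ n : measurable (Z n).
  rewrite /Z; destruct (pselect (mu (Psi @^-1` e n) = 0)).
    by apply: (mpre mPsi); apply: open_mbl.
  by apply: measurableC; apply: (mpre mPsi); apply: open_mbl.
have Z0 n : mu (Z n) = 0.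
  rewrite /Z; destruct (pselect (mu (Psi @^-1` e n) = 0)) as [h|h] => //.
  by have [//|] := hB _ (eo n).
pose M := \bigcup_n Z n.
have mM : measurable M by apply: bigcupT_measurable.
have M0 : mu M = 0.
  apply: (@measure_negligible _ _ _ mu M mM); apply: negligible_bigcup => n.
  by exists (Z n); split; [exact: mZ | exact: Z0 | by []].
have [p0 Mp0] : exists p0, ~ M p0.
  apply: contrapT => hn.
  have MT : M = setT.
    apply/seteqP; split => // p _; apply: contrapT => nMp; apply: hn.
    by exists p.
  by move: mu_setT_neq0; rewrite -MT M0 eqxx.
exists (Psi p0), M; split => // p nMp.
apply: contrapT => neq.
have [U [oU cU pU]] : exists U : set G, [/\ open U, Psi p0 \in U & Psi p \in ~` U].
  apply: (hausdorff_accessible hG).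
  by apply/eqP => h; apply: neq.
rewrite inE in cU; rewrite inE in pU.
have [n [enc enU]] := eb _ _ (open_nbhs_nbhs (conj oU cU)).
move: Mp0 nMp; rewrite /M => Mp0 nMp.
have nZ0 : ~ Z n p0 by move=> h; apply: Mp0; exists n.
have nZ : ~ Z n p by move=> h; apply: nMp; exists n.
move: nZ0 nZ; rewrite /Z; destruct (pselect (mu (Psi @^-1` e n) = 0)) => /=.
  by move=> /(_ enc).
move=> _ /contrapT /enU.
done.
Qed.

Lemma sub_cont (w w' : G -> G) : continuous w -> continuous w' ->
  continuous (fun y => (w y - w' y)%R).
Proof.
move=> wc wc' y.
apply: (@continuous_comp _ _ _ (fun y => (w y, w' y)) (fun q : G * G => q.1 - q.2)%R).
  by apply: cvg_pair; [apply: wc|apply: wc'].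
exact: sub_continuous.
Qed.

Lemma morph0 (w : G -> G) : {morph w : a b / (a + b)%R} -> w 0%R = 0%R.
Proof.
move=> wD; have := wD 0%R 0%R; rewrite addr0 -{1}[w 0%R]addr0 => /addrI.
by move/esym.
Qed.

Lemma final_step (g : X -> G) (u : G -> G) (N : set P) (c : G) :
  continuous u -> u 0%R = 0%R -> measurable N -> mu N = 0 ->
  (forall p, ~ N p -> (g p.1 + u p.2)%R = c) -> forall y, u y = 0%R.
Proof.
move=> uc u0 mN N0 hN.
have mF := @measurable_fun_xsection _ _ X BG R mG N mN.
have i0 : \int[m]_x `|(mG \o xsection N) x| = 0.
  rewrite -[RHS]N0 /product_measure1; apply: eq_integral => x _.
  by rewrite gee0_abs //; exact: measure_ge0.
have /aeE [N1 [mN1 N10 h1]] := (ae_eq_integral_abs m measurableT mF).1 i0.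
have [x0 nN1] : exists x0, ~ N1 x0.
  apply: contrapT => hn.
  have N1T : N1 = setT.
    by apply/seteqP; split => // x _; apply: contrapT => nx; apply: hn; exists x.
  move: N10; rewrite N1T => h.
  have : m setT = 1 by exact: probability_setT.
  move=> h'; have : (1 : \bar R) = 0 := etrans (esym h') h.
  by move/eqP; rewrite onee_eq0.
have Nx0 : mG (xsection N x0) = 0 by exact: (h1 x0 nN1 I).
pose V := u @^-1` (~` [set (c - g x0)%R]).
have oV : open V.
  apply: open_comp; first by move=> y _; apply: uc.
  apply: closed_openC; apply: accessible_closed_set1.
  exact: hausdorff_accessible.
have V0 : mG V = 0.
  apply: (@measure_negligible _ _ _ mG V (open_mbl oV)).
  exists (xsection N x0); split => //; first exact: measurable_xsection.
  move=> y Vy; apply/xsectionP; apply: contrapT => nN.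
  apply: Vy => /=; have := hN _ nN => /= <-.
  by rewrite addrC addKr.
have Ve : forall y, ~ V y.
  move=> y Vy; case: hm => _ _ /(_ V oV) h.
  have := h (ex_intro _ y Vy); rewrite V0.
  by rewrite ltxx.
have uc0 : forall y, u y = (c - g x0)%R.
  by move=> y; apply: contrapT => h; apply: (Ve y).
by move=> y; rewrite uc0 -(uc0 0%R) u0.
Qed.

Lemma lifts_uniq S f w f' w' : ergodic mu Tp ->
  lifts m mG T phi S f w -> lifts m mG T phi S f' w' -> w = w'.
Proof.
move=> eTp [cS mf [wD wc ws] cQ] [_ mf' [wD' wc' ws'] cQ'].
pose g x := (f x - f' x)%R.
pose u y := (w y - w' y)%R.
pose Psi (p : P) := (g p.1 + u p.2)%R.
have uc : continuous u by apply: sub_cont.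
have u0 : u 0%R = 0%R by rewrite /u (morph0 wD) (morph0 wD') subrr.
have mPsi : measurable_fun setT (Psi : P -> BG).
  apply: (@mbl_add G _ P (fun p : P => g p.1) (fun p : P => u p.2)) => //.
    apply: (@mbl_sub G _ P (fun p : P => f p.1) (fun p : P => f' p.1)) => //.
      exact: measurableT_comp mf measurable_fst.
    exact: measurableT_comp mf' measurable_fst.
  exact: measurableT_comp (cont_mbl uc) measurable_snd.
have inv : {ae mu, forall p, Psi (Tp p) = Psi p}.
  case: cQ => _ cQ; case: cQ' => _ cQ'.
  have key : forall p : P, lift_map S f w (Tp p) = Tp (lift_map S f w p) ->
      lift_map S f' w' (Tp p) = Tp (lift_map S f' w' p) -> Psi (Tp p) = Psi p.
    move=> [x y].
    rewrite /lift_map /skew_product /= => -[_ E1] [_ E2].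
    rewrite /Psi /g /u /=.
    have H (a b c d : G) : (a - b + (c - d) = (a + c) - (b + d))%R.
      by rewrite opprD addrACA.
    rewrite !H E1 E2 opprD addrACA subrr add0r.
    by [].
  near=> p; apply: key; [exact: (near cQ p) | exact: (near cQ' p)].
have [c [N [mN N0 hN]]] := inv_const mPsi eTp inv.
have := final_step uc u0 mN N0 hN.
move=> h; apply/funext => y; apply/subr0_eq; exact: h.
Unshelve. all: by end_near.
Qed.

End Main.

Unset Implicit Arguments.

Theorem mainTheorem6 (R : realType) (dX : measure_display) (X : measurableType dX)
  (m : probability X R) (G : topologicalZmodType)
  (mG : {sigma_finite_measure set (borel G) -> \bar R}) (T : X -> X) (phi : X -> G) :
  hausdorff_space G -> locally_compact [set: G] -> @second_countable G ->
  haar_measure mG ->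
  measure_preserving m T -> ergodic m T ->
  measurable_fun setT (phi : X -> borel G) ->
  ergodic (m \x mG)%E (skew_product T phi : X * borel G -> X * borel G) ->
  exists pi : (X -> X) -> (G -> G),
    [/\ (forall S, in_L m mG T phi S -> in_E m mG T phi (pi S)),
        (forall w, in_E m mG T phi w -> exists2 S, in_L m mG T phi S & pi S = w),
        (forall S1 S2, in_L m mG T phi S1 -> in_L m mG T phi S2 ->
           pi (S1 \o S2) = pi S1 \o pi S2) &
        (forall S f w, lifts m mG T phi S f w -> w = pi S)].
Proof.
move=> hG _ sc hm mpT _ mphi eTp.
have uniq S f w f' w' : lifts m mG T phi S f w -> lifts m mG T phi S f' w' -> w = w'.
  exact: (lifts_uniq hG sc hm mpT mphi eTp).
pose pi S := match pselect (exists w, exists f, lifts m mG T phi S f w) with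
  | left h => projT1 (cid h) | right _ => id end.
have piP S f w : lifts m mG T phi S f w -> w = pi S.
  move=> hl; rewrite /pi; case: pselect => [h|]; last first.
    by move=> nh; exfalso; apply: nh; exists w, f.
  case: (cid h) => w0 [f0 hl0] /=.
  exact: uniq hl hl0.
exists pi; split => //.
- move=> S [f [w hl]]; exists S, f; by rewrite -(piP _ _ _ hl).
- move=> w [S [f hl]]; exists S; first by exists f, w.
  by rewrite -(piP _ _ _ hl).
- move=> S1 S2 [f1 [w1 h1]] [f2 [w2 h2]].
  have h12 := lifts_comp sc h1 h2.
  by rewrite -(piP _ _ _ h12) -(piP _ _ _ h1) -(piP _ _ _ h2).
Qed.
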